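(* Let $p$ be an odd prime, $m\ge1$, $Q=T_{(p^m)}$ and $K=K_Q(p)$, and let $\phi=\phi_1$ be the map on $K$ defined below. If $S_\xi,S_{\xi'}\in Q$ satisfy $S_\xi^p\in Z(K)$ and $S_{\xi'}^p\in Z(K)$, then $\phi(S_\xi S_{\xi'})=\phi(S_\xi)\phi(S_{\xi'})$.
   Context: Let $\omega=e^{2\pi i/p}$, $\{|q\rangle:q\in\mathbb{Z}_p\}$ the computational basis of $\mathbb{C}^p$, $X|q\rangle=|q+1\rangle$. For $\xi:\mathbb{Z}_p\to U(1)$ let $S_\xi=\mathrm{diag}(\xi(0),\dots,\xi(p-1))$. $T=\{S_\xi:\prod_{q}\xi(q)=1\}$, $T_{(p^k)}=\{S\in T:S^{p^k}=\mathbbm{1}\}$. $K_Q(p)$ is the subgroup of $SU(p)$ generated by all $S_\xi X^b$, $S_\xi\in Q$, $b\in\mathbb{Z}_p$; each element is uniquely $S_\xi X^b$, written $(\xi,b)$. $Z(K)$ is the center of $K$. Every $S_\xi\in T_{(p^m)}$ has a unique expansion $\xi(q)=\exp\big(\sum_{j=1}^m\frac{2\pi i}{p^j}\sum_{a=0}^{p-1}\vartheta_{j,a}q^a\big)$ with $\vartheta_{j,a}\in\{0,\dots,p-1\}$ (set $\vartheta_{2,0}=0$ if $m=1$). Define $R(\xi)$ and $P(\xi)$ as the functions $R(\xi)(q)=\omega^{\vartheta_{1,0}+\vartheta_{1,1}q}e^{2\pi i\vartheta_{2,0}/p^2}$ and $P(\xi)(q)=\omega^{\vartheta_{1,0}+\vartheta_{1,1}q}$.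 Define $\phi_1:K\to U(p)$ by $\phi_1(S_\xi)=S_{R(\xi)}$, $\phi_1(S_\xi X)=S_{P(\xi)}X$, and for $2\le b\le p-1$, $\phi_1(M)=\phi_1(M^{y})^{b}$ where $M=S_\xi X^b$ and $y\in\{1,\dots,p-1\}$ with $yb\equiv1\bmod p$ (so $M^y$ has $X$-exponent $1$). *)

(* Defs.v *)
From HB Require Import structures.
From mathcomp Require Import all_boot all_order all_algebra.
From mathcomp Require Import reals trigo.
From mathcomp Require Import complex.
From Stdlib Require Import ClassicalEpsilon.

Import Order.TTheory GRing.Theory Num.Theory.
Local Open Scope ring_scope.

Section Defs.
Context {R : realType}.
Local Notation C := (complex R).

Definition expi (x : R) : C := Complex (cos x) (sin x).

Definition omega (p : nat) : C := expi (2 * pi / p%:R).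

Definition Smat (p : nat) (xi : 'I_p -> C) : 'M[C]_p := diag_mx (\row_q xi q).

(* X |q> = |q+1> : entry (i,j) is 1 iff i = j+1 mod p *)
Definition Xmat (p : nat) : 'M[C]_p :=
  \matrix_(i < p, j < p) (((i : nat) == (j.+1 %% p)%N)%:R : C).

Definition inT (p : nat) (xi : 'I_p -> C) : Prop :=
  (forall q, `|xi q| = 1) /\ \prod_(q < p) xi q = 1.

Definition inTpk (p k : nat) (xi : 'I_p -> C) : Prop :=
  inT p xi /\ (Smat p xi) ^+ (p ^ k) = 1.

(* K = K_Q(p) with Q = T_(p^m): the subgroup of matrices generated by all
   S_xi X^b (S_xi in Q, b in Z_p). *)
Inductive inK (p m : nat) : 'M[C]_p -> Prop :=
| inK1 : inK p m 1
| inKmul (xi : 'I_p -> C) (b : nat) (M : 'M[C]_p) :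
    inTpk p m xi -> (b < p)%N -> inK p m M -> inK p m ((Smat p xi *m Xmat p ^+ b) *m M)
| inKinv (xi : 'I_p -> C) (b : nat) (M : 'M[C]_p) :
    inTpk p m xi -> (b < p)%N -> inK p m M ->
    inK p m (invmx (Smat p xi *m Xmat p ^+ b) *m M).

Definition inZK (p m : nat) (M : 'M[C]_p) : Prop :=
  inK p m M /\ forall N, inK p m N -> M *m N = N *m M.

(* xi(q) = exp( sum_{j=1}^m 2 pi i / p^j sum_{a=0}^{p-1} theta_{j,a} q^a ),
   theta_{j,a} in {0..p-1}; entries outside 1<=j<=m, a<p are set to 0
   (normalisation, so that "theta_{2,0}=0 if m=1" holds). *)
Definition is_expansion (p m : nat) (xi : 'I_p -> C) (th : nat -> nat -> nat) : Prop :=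
  (forall j a, (th j a < p)%N) /\
  (forall j a, (j == 0%N) || (m < j)%N || (p <= a)%N -> th j a = 0%N) /\
  (forall q : 'I_p,
     xi q = expi (\sum_(1 <= j < m.+1)
                    (2 * pi / (p ^ j)%:R) * (\sum_(a < p) (th j a * q ^ a)%N%:R))).

Definition theta (p m : nat) (xi : 'I_p -> C) : nat -> nat -> nat :=
  epsilon (inhabits (fun _ _ => 0%N)) (is_expansion p m xi).

Definition Rfun (p m : nat) (xi : 'I_p -> C) : 'I_p -> C :=
  fun q => let th := theta p m xi in
    omega p ^+ (th 1 0 + th 1 1 * q)%N * expi (2 * pi * (th 2 0)%:R / (p ^ 2)%:R).

Definition Pfun (p m : nat) (xi : 'I_p -> C) : 'I_p -> C :=
  fun q => let th := theta p m xi in omega p ^+ (th 1 0 + th 1 1 * q)%N.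

Definition inv_mod (p b : nat) : nat :=
  head 0%N [seq y <- iota 1 p.-1 | (y * b %% p == 1)%N].

(* for M = S_xi X^b, M^y = S_eta X^(yb) with eta(q) = prod_{k<y} xi(q - k b) *)
Definition pow_diag (p : nat) (xi : 'I_p -> C) (b y : nat) : 'I_p -> C :=
  fun q => \prod_(k < y) xi (insubd q ((q + k * (p - b)) %% p)%N).

(* phi_1 on the element (xi, b) = S_xi X^b of K, 0 <= b <= p-1 *)
Definition phi1 (p m : nat) (xi : 'I_p -> C) (b : nat) : 'M[C]_p :=
  if b == 0%N then Smat p (Rfun p m xi)
  else if b == 1%N then Smat p (Pfun p m xi) *m Xmat p
  else let y := inv_mod p b in
       (Smat p (Pfun p m (pow_diag p xi b y)) *m Xmat p) ^+ b.

End Defs.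

(* Main.v *)
Require Import Defs.
From HB Require Import structures.
From mathcomp Require Import all_boot all_order all_algebra.
From mathcomp Require Import reals trigo.
From mathcomp Require Import complex.
From mathcomp Require Import zify ring lra.
From Stdlib Require Import ClassicalEpsilon.
Import Order.TTheory GRing.Theory Num.Theory.
Local Open Scope ring_scope.


Lemma expiD (R : realType) (x y : R) : expi (x + y) = expi x * expi y.
Proof. by rewrite /expi cosD sinD /=; congr Complex; ring. Qed.

Lemma expi0 (R : realType) : expi (0 : R) = 1.
Proof. by rewrite /expi cos0 sin0. Qed.

Lemma expiX (R : realType) (x : R) n : expi x ^+ n = expi (x *+ n).
Proof.
elim: n => [|n IH]; first by rewrite expr0 mulr0n expi0.
by rewrite exprS IH mulrS expiD.
Qed.

Lemma expi2pi (R : realType) : expi (2 * pi : R) = 1.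
Proof.
have -> : (2 * pi : R) = pi *+ 2 by rewrite mulr_natl.
by rewrite /expi cos2pi sin2pi.
Qed.

Lemma expi_neq1 (R : realType) (x : R) : 0 < x < 2 * pi -> expi x != 1.
Proof.
move=> /andP[x0 x2]; apply/negP => /eqP [] c1 _.
have pi0 := @pi_gt0 R.
have cl : forall y : R, 0 < y <= pi -> cos y < 1.
  move=> y /andP[y0 ypi]; rewrite -cos0 ltr_cos ?in_itv /= ?lexx ?ypi ?(ltW y0) ?(ltW pi0) //.
have [xpi|xpi] := lerP x pi.
  by move: (cl x); rewrite x0 xpi c1 ltxx => /(_ isT).
have : cos (2 * pi - x) < 1.
  by apply: cl; apply/andP; split; lra.
have -> : (2 * pi : R) = pi *+ 2 by rewrite mulr_natl.
by rewrite cosB cos2pi sin2pi mul1r mul0r addr0 c1 ltxx.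
Qed.

Definition E (R : realType) (M n : nat) : complex R := expi (2 * pi * n%:R / M%:R).

Lemma ED (R : realType) M a b : E R M (a + b) = E R M a * E R M b.
Proof. by rewrite /E -expiD natrD !mulrDr mulrDl. Qed.

Lemma E0 (R : realType) M : E R M 0 = 1.
Proof. by rewrite /E mulr0 mul0r expi0. Qed.

Lemma EX (R : realType) M a n : E R M a ^+ n = E R M (a * n).
Proof. by rewrite /E expiX natrM -mulr_natr; congr expi; ring. Qed.

Lemma EMk (R : realType) M k : (0 < M)%N -> E R M (k * M) = 1.
Proof.
move=> M0; rewrite /E natrM mulrA mulfK ?pnatr_eq0 -?lt0n //.
by rewrite mulr_natr -(@expiX R (2 * pi)) expi2pi expr1n.
Qed.

Lemma E_mod (R : realType) M a : (0 < M)%N -> E R M (a %% M) = E R M a.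
Proof. by move=> M0; rewrite {2}(divn_eq a M) ED EMk // mul1r. Qed.

Lemma E_eq (R : realType) M a b : (0 < M)%N -> a = b %[mod M] -> E R M a = E R M b.
Proof. by move=> M0 h; rewrite -E_mod // h E_mod. Qed.

Lemma E_neq0 (R : realType) M a : E R M a != 0.
Proof.
apply/negP => /eqP h; have := @expiD R (2 * pi * a%:R / M%:R) (- (2 * pi * a%:R / M%:R)).
by rewrite addrN expi0 -/(E R M a) h mul0r; apply/eqP; rewrite oner_eq0.
Qed.

Lemma E1 (R : realType) M k : (0 < k < M)%N -> E R M k != 1.
Proof.
move=> /andP[k0 kM]; apply: expi_neq1.
have pi0 := @pi_gt0 R.
have M0 : (0 : R) < M%:R by rewrite ltr0n (ltn_trans k0).
have k0' : (0 : R) < k%:R by rewrite ltr0n.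
have kM' : (k%:R : R) / M%:R < 1 by rewrite ltr_pdivrMr // mul1r ltr_nat.
rewrite -mulrA; apply/andP; split; first by rewrite !mulr_gt0 // invr_gt0.
have : 0 < (k%:R : R) / M%:R by rewrite divr_gt0.
nra.
Qed.

Lemma E_inj (R : realType) M a b : (0 < M)%N -> E R M a = E R M b -> a = b %[mod M].
Proof.
move=> M0; rewrite -(E_mod R M a) // -(E_mod R M b) //.
wlog le : a b / (a %% M <= b %% M)%N.
  move=> W h; case: (leqP (a %% M) (b %% M)) => [l|l]; first exact: W.
  by apply/esym/W; [exact: ltnW|].
move=> h; apply/eqP; rewrite eqn_leq le /=; rewrite leqNgt; apply/negP => lt.
have H1 : E R M (b %% M - a %% M) != 1 by apply: E1; rewrite subn_gt0 lt /= ltn_subLR ?ltn_pmod // ?(leq_trans (ltn_pmod _ M0)) ?leq_addl // ltnW.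
apply: (negP H1); apply/eqP/(mulfI (E_neq0 R M (a %% M))); rewrite -ED subnKC ?(ltnW lt) // h mulr1 //.
Qed.

Lemma E_scale (R : realType) p N k : (0 < p)%N -> E R (p * N) (p * k) = E R N k.
Proof.
move=> p0; case: (posnP N) => [->|N0]; first by rewrite muln0 /E !invr0 !mulr0.
rewrite /E !natrM; congr expi.
have : (p%:R : R) != 0 by rewrite pnatr_eq0 -lt0n.
move=> h; rewrite invfM; field.
by rewrite h pnatr_eq0 -lt0n N0.
Qed.

Lemma root_unity_E (R : realType) N (z : complex R) : (0 < N)%N -> z ^+ N = 1 ->
  exists k, z = E R N k.
Proof.
move=> N0 zN.
pose rs := [seq E R N k | k <- iota 0 N].
have urs : uniq rs.
  rewrite map_inj_in_uniq ?iota_uniq // => i j; rewrite !mem_iota /= !add0n => iN jN h.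
  by move: (@E_inj R N i j N0 h); rewrite !modn_small.
have rrs : all (root ('X^N - 1)) rs.
  apply/allP => x /mapP [k _ ->]; by rewrite rootE !hornerE EX EMk // subrr.
case: (boolP (z \in rs)) => [/mapP [k' _ ->]|zn]; first by exists k'.
have : uniq (z :: rs) by rewrite /= zn urs.
have : all (root ('X^N - 1)) (z :: rs) by rewrite /= rrs rootE !hornerE zN subrr eqxx.
move=> a u.
have nz : ('X^N - 1 : {poly complex R}) != 0 by rewrite -size_poly_eq0 size_XnsubC.
by have := max_poly_roots nz a u; rewrite size_XnsubC // /= size_map size_iota ltnn.
Qed.

Arguments E_inj {R M a b}.
Arguments E_eq {R M a b}.


Lemma polyU1 p (d e : nat -> nat) : prime p ->
  (forall q, (q < p)%N -> (\sum_(a < p) d a * q ^ a = \sum_(a < p) e a * q ^ a %[mod p])%N) ->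
  forall a, (a < p)%N -> (d a = e a %[mod p])%N.
Proof.
move=> pr H.
pose P : {poly 'F_p} := \poly_(a < p) ((d a)%:R - (e a)%:R).
have P0 : P = 0.
  apply/eqP; apply: contraT => nz.
  pose rs := [seq ((val q)%:R : 'F_p) | q : 'I_p].
  have u : uniq rs.
    rewrite map_inj_uniq ?enum_uniq // => i j /(congr1 (@nat_of_ord _)).
    rewrite !val_Fp_nat // !modn_small ?ltn_ord // => h; exact: val_inj.
  have r : all (root P) rs.
    apply/allP => x /mapP [q _ ->]; rewrite rootE horner_poly.
    under eq_bigr do rewrite mulrBl.
    rewrite sumrB.
    under eq_bigr do rewrite -natrX -natrM.
    under [X in _ - X]eq_bigr do rewrite -natrX -natrM.
    rewrite -!natr_sum -(Fp_nat_mod pr (\sum_i _)) H ?ltn_ord // Fp_nat_mod // subrr //.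
  have := max_poly_roots nz r u.
  rewrite size_map size_enum_ord ltnNge (leq_trans (size_poly _ _)) //.
move=> a ap; have := congr1 (fun P : {poly 'F_p} => P`_a) P0.
rewrite coef_poly ap coef0 => /eqP; rewrite subr_eq0 => /eqP /(congr1 (@nat_of_ord _)).
by rewrite !val_Fp_nat.
Qed.

Lemma polyU p k (d e : nat -> nat) : prime p ->
  (forall q, (q < p)%N -> (\sum_(a < p) d a * q ^ a = \sum_(a < p) e a * q ^ a %[mod p ^ k])%N) ->
  forall a, (a < p)%N -> (d a = e a %[mod p ^ k])%N.
Proof.
move=> pr; have p0 := prime_gt0 pr.
elim: k d e => [|k IH] d e H a ap; first by rewrite expn0 !modn1.
have Hp : forall q, (q < p)%N -> (\sum_(a < p) d a * q ^ a = \sum_(a < p) e a * q ^ a %[mod p])%N.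
  have dv : (p %| p ^ k.+1)%N by rewrite expnS dvdn_mulr.
  move=> q qp; have := H q qp; move/(congr1 (modn^~ p)).
  by rewrite !(modn_dvdm _ dv).
have D := @polyU1 p d e pr Hp.
have Hk : forall q, (q < p)%N -> (\sum_(a < p) (d a %/ p) * q ^ a = \sum_(a < p) (e a %/ p) * q ^ a %[mod p ^ k])%N.
  move=> q qp; have := H q qp.
  have sp : forall f : nat -> nat, (\sum_(a < p) f a * q ^ a = p * \sum_(a < p) (f a %/ p) * q ^ a + \sum_(a < p) (f a %% p) * q ^ a)%N.
    move=> f; rewrite big_distrr -big_split /=; apply: eq_bigr => i _.
    by rewrite {1}(divn_eq (f i) p) mulnDl mulnA (mulnC p).
  have E2 : (\sum_(a<p) e a %% p * q^a = \sum_(a<p) d a %% p * q^a)%N.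
    by apply: eq_bigr => i _; rewrite D.
  rewrite !sp E2.
  move/eqP; rewrite eqn_modDr expnS -!muln_modr eqn_pmul2l //; exact/eqP.
rewrite (divn_eq (d a) p) (divn_eq (e a) p) (D a ap).
apply/eqP; rewrite eqn_modDr expnS [(p * _)%N]mulnC -!muln_modl.
by have /= -> := IH (fun a => d a %/ p)%N (fun a => e a %/ p)%N Hk a ap.
Qed.

Lemma digit_bound p n (f : nat -> nat) : (forall i, f i < p)%N ->
  (\sum_(i < n) f i * p ^ i < p ^ n)%N.
Proof.
move=> fp; elim: n => [|n IH]; first by rewrite big_ord0 expn0.
rewrite big_ord_recr /= expnS.
have := fp n; move: IH; set S := (\sum_(i < n) _)%N; set P := (p ^ n)%N => h1 h2.
nia.
Qed.

Lemma digits_mod p n c : (0 < p)%N ->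
  (\sum_(i < n) (c %/ p ^ i %% p) * p ^ i = c %% p ^ n)%N.
Proof.
move=> p0; elim: n => [|n IH]; first by rewrite big_ord0 expn0 modn1.
rewrite big_ord_recr /= IH.
have P0 : (0 < p ^ n)%N by rewrite expn_gt0 p0.
set P := (p ^ n)%N.
have e1 := divn_eq c P.
have e2 := divn_eq (c %/ P) p.
have b1 : (c %% P < P)%N by rewrite ltn_mod.
have b2 : (c %/ P %% p < p)%N by rewrite ltn_mod.
rewrite expnS -/P.
have E3 : c = ((c %/ P %/ p) * (p * P) + ((c %/ P %% p) * P + c %% P))%N.
  by rewrite {1}e1 {1}e2; ring.
rewrite [in RHS]E3 modnMDl [in RHS]modn_small; first by rewrite addnC.
move: b1 b2; move: (c %% P)%N ((c %/ P) %% p)%N => y x b1 b2.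
have := leq_mul b2 (leqnn P); clearbody P; nia.
Qed.


Definition cof (p m : nat) (th : nat -> nat -> nat) (a : nat) : nat :=
  (\sum_(i < m) th (m - i)%N a * p ^ i)%N.
Definition Vf (p m : nat) (th : nat -> nat -> nat) (q : nat) : nat :=
  (\sum_(a < p) cof p m th a * q ^ a)%N.

Lemma sum_rev (V : zmodType) m (F : nat -> V) :
  \sum_(1 <= j < m.+1) F j = \sum_(i < m) F (m - i)%N.
Proof.
rewrite big_add1 /= big_mkord (reindex_inj rev_ord_inj) /=.
by apply: eq_bigr => i _; rewrite subnSK.
Qed.

Lemma exp_val (R : realType) p m (th : nat -> nat -> nat) (q : nat) : (0 < p)%N ->
  expi (\sum_(1 <= j < m.+1) (2 * pi / (p ^ j)%:R) * (\sum_(a < p) (th j a * q ^ a)%N%:R))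
  = E R (p ^ m.+1) (p * Vf p m th q).
Proof.
move=> p0; rewrite /E sum_rev; congr expi.
have -> : (p * Vf p m th q = \sum_(i < m) p ^ i.+1 * \sum_(a < p) th (m - i)%N a * q ^ a)%N.
  rewrite /Vf /cof big_distrr /=.
  under eq_bigr do rewrite big_distrl /= big_distrr /=.
  rewrite exchange_big /=; apply: eq_bigr => i _; rewrite big_distrr /=.
  by apply: eq_bigr => a _; rewrite expnS; ring.
rewrite natr_sum mulr_sumr mulr_suml; apply: eq_bigr => i _.
rewrite natrM natr_sum.
have pn : forall k, ((p ^ k)%:R : R) != 0 by move=> k; rewrite pnatr_eq0 expn_eq0 negb_and -lt0n p0.
have -> : (p ^ m.+1 = p ^ (m - i) * p ^ i.+1)%N by rewrite -expnD addnS subnK // ltnW.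
rewrite natrM; field; rewrite !pn //.
Qed.

Lemma exists_exp (R : realType) p m (xi : 'I_p -> complex R) : prime p ->
  (forall q, xi q ^+ (p ^ m) = 1) -> exists th, is_expansion p m xi th.
Proof.
case: p xi => [|p'] xi pr; first by [].
set p := p'.+1 => xiN.
have p0 : (0 < p)%N by [].
have N0 : (0 < p ^ m)%N by rewrite expn_gt0.
have [k kE] : exists k : 'I_p -> nat, forall q, xi q = E R (p ^ m) (k q).
  by apply: (@fin_all_exists _ (fun _ => nat) (fun q n => xi q = E R (p ^ m) n)) => q; exact: root_unity_E (xiN q).
pose Phi (c : {ffun 'I_p -> 'I_(p ^ m)}) : {ffun 'I_p -> 'I_(p ^ m)} :=
  [ffun q : 'I_p => Ordinal (ltn_pmod (\sum_(a < p) c a * (q : nat) ^ a)%N N0)].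
have Phi_inj : injective Phi.
  move=> c c' /ffunP h; apply/ffunP => a.
  pose d (b : nat) := (c (inord b) : nat); pose d' (b : nat) := (c' (inord b) : nat).
  have sd : forall (f : {ffun 'I_p -> 'I_(p ^ m)}) (q : nat),
      (\sum_(a < p) (f (inord a) : nat) * q ^ a = \sum_(a < p) f a * q ^ a)%N.
    by move=> f q; apply: eq_bigr => i _; rewrite inord_val.
  have Hc : forall q, (q < p)%N ->
      (\sum_(a < p) d a * q ^ a = \sum_(a < p) d' a * q ^ a %[mod p ^ m])%N.
    move=> q qp; rewrite /d /d' !sd.
    by have := congr1 (@nat_of_ord _) (h (inord q)); rewrite !ffunE /= inordK.
  have := @polyU p m d d' pr Hc a (ltn_ord a).
  rewrite /d /d' inord_val !modn_small ?ltn_ord // => e; exact/val_inj.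
have [g gK Kg] := injF_bij Phi_inj.
pose t := [ffun q : 'I_p => Ordinal (ltn_pmod (k q) N0)].
pose c := g t.
have ct : forall q : 'I_p, (\sum_(a < p) c a * (q : nat) ^ a = k q %[mod p ^ m])%N.
  move=> q; have := congr1 (fun f : {ffun 'I_p -> 'I_(p ^ m)} => (f q : nat)) (Kg t); rewrite /= !ffunE /= => ->.
  by [].
pose th (j a : nat) : nat :=
  if (0 < j <= m)%N && (a < p)%N then (((c (inord a) : nat) %/ p ^ (m - j)) %% p)%N else 0%N.
exists th; split; [|split].
- by move=> j a; rewrite /th; case: ifP => _ //; rewrite ltn_mod.
- move=> j a; rewrite /th => h; case: ifP => // /andP [/andP [h1 h2] h3].
  by move: h; rewrite -(negbK (j == 0)%N) -lt0n h1 /= ltnNge h2 /= leqNgt h3.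
move=> q; rewrite exp_val // expnS E_scale // kE; apply: E_eq => //.
rewrite -ct /Vf; congr (_ %% _)%N; apply: eq_bigr => a _; congr (_ * _)%N.
rewrite /cof; symmetry; transitivity ((c a : nat) %% p ^ m)%N; last by rewrite modn_small.
rewrite -digits_mod //.
apply: eq_bigr => i _; rewrite /th ltn_ord andbT subn_gt0 ltn_ord leq_subr /=.
by rewrite inord_val subKn // ltnW.
Qed.

Lemma theta_ok (R : realType) p m (xi : 'I_p -> complex R) : prime p ->
  (forall q, xi q ^+ (p ^ m) = 1) -> is_expansion p m xi (theta p m xi).
Proof. by move=> pr h; rewrite /theta; apply: epsilon_spec; exact: exists_exp. Qed.

Definition W (p' : nat) (th : nat -> nat -> nat) (q : nat) : nat :=
  (\sum_(a < p') th 1%N a.+1 * q ^ a.+1)%N.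

Lemma Vf_split p' m th q :
  Vf p'.+1 m th q = (cof p'.+1 m th 0 + \sum_(a < p') cof p'.+1 m th a.+1 * q ^ a.+1)%N.
Proof. by rewrite /Vf big_ord_recl /= expn0 muln1. Qed.

Lemma Vf0 p' m th : Vf p'.+1 m th 0 = cof p'.+1 m th 0.
Proof. by rewrite Vf_split big1 ?addn0 // => i _; rewrite exp0n // muln0. Qed.

Lemma cof_split p m' th a :
  cof p m'.+1 th a = (\sum_(i < m') th (m'.+1 - i)%N a * p ^ i + th 1%N a * p ^ m')%N.
Proof. by rewrite /cof big_ord_recr /= subSnn. Qed.

Lemma cof_high p' m' (th : nat -> nat -> nat) :
  prime p'.+1 -> (forall j a, th j a < p'.+1)%N ->
  (forall q, (q < p'.+1)%N -> (Vf p'.+1 m'.+1 th q = Vf p'.+1 m'.+1 th 0 %[mod p'.+1 ^ m'])%N) ->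
  forall a, (0 < a < p'.+1)%N -> cof p'.+1 m'.+1 th a = (th 1%N a * p'.+1 ^ m')%N.
Proof.
set p := p'.+1 => pr thb H a /andP [a0 ap].
pose e (b : nat) := if b == 0%N then cof p m'.+1 th 0 else 0%N.
have He : forall q, (q < p)%N -> (\sum_(b < p) e b * q ^ b = Vf p m'.+1 th 0)%N.
  move=> q _; rewrite Vf0 big_ord_recl /= big1 ?addn0 ?expn0 ?muln1 //.
have Hc : forall q, (q < p)%N -> (\sum_(b < p) cof p m'.+1 th b * q ^ b = \sum_(b < p) e b * q ^ b %[mod p ^ m'])%N.
  by move=> q qp; rewrite He //; exact: H.
have := @polyU p m' (cof p m'.+1 th) e pr Hc a ap.
rewrite /e (negbTE (lt0n_neq0 a0)) mod0n => /eqP; rewrite -/(dvdn _ _) cof_split => dv.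
have rb := @digit_bound p m' (fun i => th (m'.+1 - i)%N a) (fun i => thb _ _).
suff -> : (\sum_(i < m') th (m'.+1 - i)%N a * p ^ i = 0)%N by [].
apply/eqP; rewrite -(modn_small rb); apply/eqP.
apply/eqP; move: dv; rewrite dvdn_addl ?dvdn_mull //.
Qed.

Lemma structure_nat p' m' (th : nat -> nat -> nat) :
  prime p'.+1 ->
  (forall j a, th j a < p'.+1)%N ->
  (forall j a, (j == 0%N) || (m'.+1 < j)%N || (p'.+1 <= a)%N -> th j a = 0%N) ->
  (forall q, (q < p'.+1)%N -> (Vf p'.+1 m'.+1 th q = Vf p'.+1 m'.+1 th 0 %[mod p'.+1 ^ m'])%N) ->
  (p'.+1 ^ m'.+2 %| p'.+1 * \sum_(q < p'.+1) Vf p'.+1 m'.+1 th q)%N ->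
  (forall q, Vf p'.+1 m'.+1 th q = cof p'.+1 m'.+1 th 0 + p'.+1 ^ m' * W p' th q)%N /\
  (p'.+1 * cof p'.+1 m'.+1 th 0 = p'.+1 ^ m'.+1 * th 1%N 0%N + p'.+1 ^ m' * th 2%N 0%N)%N.
Proof.
set p := p'.+1 => pr thb thn H1 H2.
have p0 : (0 < p)%N by [].
have HV : forall q, (Vf p m'.+1 th q = cof p m'.+1 th 0 + p ^ m' * W p' th q)%N.
  move=> q; rewrite Vf_split /W big_distrr /=; congr (_ + _)%N.
  apply: eq_bigr => a _; rewrite (@cof_high p' m') //; first by rewrite /p; ring.
  by rewrite /= ltnS ltn_ord.
split=> //.
move: H2; under eq_bigr do rewrite HV.
rewrite big_split /= sum_nat_const card_ord -big_distrr /=.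
rewrite mulnDr mulnA => dv0.
have : (p ^ m'.+1 %| p * p * cof p m'.+1 th 0 + p * (p ^ m' * \sum_(i < p) W p' th i))%N.
  by apply: dvdn_trans dv0; rewrite (expnS p m'.+1) dvdn_mull.
rewrite dvdn_addl; last by rewrite mulnA -expnS dvdn_mulr.
clear dv0.
case: m' thn H1 HV => [|m''] thn H1 HV dv.
  rewrite /cof big_ord1 subn0 expn0 muln1 (thn 2%N 0%N) ?muln0 ?addn0 ?expn1 //.
rewrite !expnS mulnA dvdn_pmul2l ?muln_gt0 ?p0 // in dv.
rewrite !cof_split big_ord_recr /= in dv *.
have -> : (m''.+2 - m'' = 2)%N by rewrite -addn2 addKn.
have rb := @digit_bound p m'' (fun i => th (m''.+2 - i)%N 0%N) (fun i => thb _ _).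
have -> : (\sum_(i < m'') th (m''.+2 - i)%N 0%N * p ^ i = 0)%N.
  apply/eqP; rewrite -(modn_small rb); apply/eqP.
  apply/eqP; move: dv; rewrite -addnA dvdn_addl // dvdn_add // ?dvdn_mull // expnS dvdn_mull //.
rewrite add0n !expnS; ring.
Qed.


Lemma Rfun_E (R : realType) p m' (xi : 'I_p -> complex R) (q : 'I_p) : (0 < p)%N ->
  Rfun p m'.+1 xi q = E R (p ^ m'.+2)
    (p ^ m'.+1 * (theta p m'.+1 xi 1 0 + theta p m'.+1 xi 1 1 * q) + p ^ m' * theta p m'.+1 xi 2 0)%N.
Proof.
move=> p0; rewrite /Rfun ED; congr (_ * _).
  rewrite (expnSr p m'.+1).
  rewrite (@E_scale R (p ^ m'.+1)%N p) ?expn_gt0 ?p0 //.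
  rewrite /omega expiX /E; congr expi.
  by rewrite -mulr_natr; ring.
have -> : (p ^ m'.+2 = p ^ m' * p ^ 2)%N by rewrite -expnD addn2.
by rewrite (@E_scale R (p ^ m')%N) ?expn_gt0 ?p0.
Qed.

Lemma E_pow (R : realType) M a n : E R M a ^+ n = E R M (a * n).
Proof. exact: EX. Qed.

Lemma E_sum (R : realType) M (I : finType) (f : I -> nat) :
  \prod_(i : I) E R M (f i) = E R M (\sum_(i : I) f i).
Proof. by rewrite (big_morph (E R M) (@ED R M) (E0 R M)). Qed.

Lemma xi_form (R : realType) p' m' (xi : 'I_p'.+1 -> complex R) :
  prime p'.+1 ->
  (forall q, xi q ^+ (p'.+1 ^ m'.+1) = 1) ->
  (forall q, xi q ^+ p'.+1 = xi ord0 ^+ p'.+1) ->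
  \prod_(q < p'.+1) xi q = 1 ->
  forall q : 'I_p'.+1, xi q = E R (p'.+1 ^ m'.+2)
    (p'.+1 ^ m'.+1 * theta p'.+1 m'.+1 xi 1 0 + p'.+1 ^ m' * theta p'.+1 m'.+1 xi 2 0
     + p'.+1 ^ m'.+1 * W p' (theta p'.+1 m'.+1 xi) q)%N.
Proof.
set p := p'.+1 => pr hN hc hprod.
have p0 : (0 < p)%N by [].
have M0 : (0 < p ^ m'.+2)%N by rewrite expn_gt0 p0.
have [thb [thn thv]] := @theta_ok R _ _ xi pr hN.
set th := theta p m'.+1 xi in thb thn thv *.
have xE : forall q : 'I_p, xi q = E R (p ^ m'.+2) (p * Vf p m'.+1 th q).
  by move=> q; rewrite thv exp_val.
have H1 : forall q, (q < p)%N -> (Vf p m'.+1 th q = Vf p m'.+1 th 0 %[mod p ^ m'])%N.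
  move=> q qp; have := hc (Ordinal qp); rewrite !xE !EX => /(E_inj M0).
  rewrite /= !expnS !mulnA -!(mulnC p) !mulnA.
  by rewrite -!(muln_modr (p * p)%N) => /eqP; rewrite eqn_pmul2l ?muln_gt0 ?p0 // => /eqP.
have H2 : (p ^ m'.+2 %| p * \sum_(q < p) Vf p m'.+1 th q)%N.
  move: hprod; under eq_bigr do rewrite xE.
  rewrite E_sum -(E0 R (p ^ m'.+2)) => /(E_inj M0); rewrite mod0n big_distrr.
  by move/eqP.
have [HV Hc] := @structure_nat p' m' th pr thb thn H1 H2.
move=> q; rewrite xE HV mulnDr Hc mulnA -expnS //.
Qed.


Lemma Smat_mul (R : realType) n (f g : 'I_n -> complex R) :
  Smat n f *m Smat n g = Smat n (fun q => f q * g q).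
Proof. by rewrite /Smat mulmx_diag; congr diag_mx; apply/rowP => j; rewrite !mxE. Qed.

Lemma Smat_ext (R : realType) n (f g : 'I_n -> complex R) :
  (forall q, f q = g q) -> Smat n f = Smat n g.
Proof. by move=> h; rewrite /Smat; congr diag_mx; apply/rowP => j; rewrite !mxE h. Qed.

Lemma Smat1 (R : realType) n : Smat n (fun _ => (1 : complex R)) = 1%:M.
Proof.
by apply/matrixP => i j; rewrite /Smat !mxE; case: eqP => // _; rewrite mulr1n.
Qed.

Lemma Smat_pow (R : realType) n (f : 'I_n.+1 -> complex R) k :
  Smat n.+1 f ^+ k = Smat n.+1 (fun q => f q ^+ k).
Proof.
elim: k => [|k IH].
  by rewrite expr0 (@Smat_ext R _ _ (fun _ => 1)) ?Smat1 // => q; rewrite expr0.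
by rewrite exprS IH [_ * _]Smat_mul; apply: Smat_ext => q; rewrite exprS.
Qed.

Lemma Smat_entry (R : realType) n (f : 'I_n -> complex R) q : Smat n f q q = f q.
Proof. by rewrite /Smat !mxE eqxx mulr1n. Qed.

Lemma inTpk1 (R : realType) p' m : inTpk (R:=R) p'.+1 m (fun _ => 1).
Proof.
split; first split.
- by move=> q; rewrite normr1.
- by rewrite big1.
by rewrite Smat1 expr1n.
Qed.

Lemma X_inK (R : realType) p' m : (1 < p'.+1)%N -> inK (R:=R) p'.+1 m (Xmat p'.+1).
Proof.
move=> p1; have := @inKmul R p'.+1 m (fun _ => 1) 1 1 (inTpk1 R p' m) p1 (inK1 _ _).
by rewrite Smat1 mul1mx expr1 mulmx1.
Qed.

Lemma center_const (R : realType) p' m (g : 'I_p'.+1 -> complex R) : (1 < p'.+1)%N ->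
  inZK p'.+1 m (Smat p'.+1 g) -> forall q, g q = g ord0.
Proof.
move=> p1 [_ Hc]; have := Hc _ (@X_inK R p' m p1) => hc.
have step : forall j : 'I_p'.+1, g (inord (j.+1 %% p'.+1)) = g j.
  move=> j; have := congr1 (fun A : 'M_p'.+1 => A (inord (j.+1 %% p'.+1)) j) hc.
  rewrite /= mul_mx_diag mul_diag_mx !mxE inordK ?ltn_pmod // eqxx mulr1 mul1r => ->.
  by [].
have ind : forall n, (n < p'.+1)%N -> g (inord n) = g ord0.
  elim=> [|n IH] np; first by congr g; apply/val_inj; rewrite /= inordK.
  have := step (inord n); rewrite inordK ?(ltn_trans (ltnSn n)) // modn_small // => ->.
  exact/IH/(ltn_trans (ltnSn n)).
by move=> q; rewrite -(ind q (ltn_ord q)) inord_val.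
Qed.

Lemma cong_step p m A B C D : (0 < p)%N ->
  (A + p ^ m * B = C + p ^ m * D %[mod p ^ m.+1])%N -> (A = C %[mod p ^ m.+1])%N ->
  (B = D %[mod p])%N.
Proof.
move=> p0 h1 h2; move: h1; rewrite -modnDml h2 modnDml => /eqP; rewrite eqn_modDl.
rewrite expnSr -!muln_modr => /eqP /eqP; rewrite eqn_pmul2l ?expn_gt0 ?p0 //; exact/eqP.
Qed.

Lemma cong_back p m A B C D : (A = C %[mod p ^ m.+1])%N -> (B = D %[mod p])%N ->
  (A + p ^ m * B = C + p ^ m * D %[mod p ^ m.+1])%N.
Proof.
move=> h1 h2; rewrite -modnDm h1 expnSr -muln_modr h2 muln_modr modnDm //.
Qed.

Lemma W0 p' th : W p' th 0 = 0%N.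
Proof. by rewrite /W big1 // => i _; rewrite exp0n // muln0. Qed.

Lemma diag_hyps (R : realType) p' m' (xi : 'I_p'.+1 -> complex R) :
  inTpk p'.+1 m'.+1 xi -> inZK p'.+1 m'.+1 (Smat p'.+1 xi ^+ p'.+1) -> prime p'.+1 ->
  [/\ forall q, xi q ^+ (p'.+1 ^ m'.+1) = 1,
      forall q, xi q ^+ p'.+1 = xi ord0 ^+ p'.+1 &
      \prod_(q < p'.+1) xi q = 1].
Proof.
move=> [[_ hP] hN] Z pr; split=> //.
- move=> q; rewrite Smat_pow in hN; have := congr1 (fun A : 'M_p'.+1 => A q q) hN.
  by rewrite /= Smat_entry => ->; rewrite mxE eqxx.
- rewrite Smat_pow in Z; move=> q.
  exact: (@center_const R p' m'.+1 (fun q => xi q ^+ p'.+1) (prime_gt1 pr) Z q).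
Qed.

Theorem lemma5 (R : realType) (p m : nat) (xi xi' : 'I_p -> complex R) :
  prime p -> odd p -> (1 <= m)%N ->
  inTpk p m xi -> inTpk p m xi' ->
  inZK p m (Smat p xi ^+ p) -> inZK p m (Smat p xi' ^+ p) ->
  (* S_xi S_xi' = S_(xi xi'), i.e. the element (xi xi', 0) of K *)
  phi1 p m (fun q => xi q * xi' q) 0 = phi1 p m xi 0 *m phi1 p m xi' 0.
Proof.
case: p xi xi' => [|p'] xi xi' pr; first by [].
case: m => [|m'] // _ _ T T' Z Z'.
set p := p'.+1.
have p0 : (0 < p)%N by [].
have p1 : (1 < p)%N := prime_gt1 pr.
have M0 : (0 < p ^ m'.+2)%N by rewrite expn_gt0 p0.
have [hN hc hP] := @diag_hyps R p' m' xi T Z pr.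
have [hN' hc' hP'] := @diag_hyps R p' m' xi' T' Z' pr.
pose xi'' := fun q => xi q * xi' q.
have hN'' : forall q, xi'' q ^+ (p ^ m'.+1) = 1 by move=> q; rewrite exprMn hN hN' mulr1.
have hc'' : forall q, xi'' q ^+ p = xi'' ord0 ^+ p by move=> q; rewrite !exprMn hc hc'.
have hP'' : \prod_(q < p) xi'' q = 1 by rewrite big_split /= hP hP' mulr1.
have F := @xi_form R p' m' _ pr hN hc hP.
have F' := @xi_form R p' m' _ pr hN' hc' hP'.
have F'' := @xi_form R p' m' _ pr hN'' hc'' hP''.
rewrite -/p in F F' F''.
rewrite /phi1 /= Smat_mul -/xi''; apply: Smat_ext => q; rewrite !Rfun_E // -ED.
apply: (E_eq M0).
set th := theta p m'.+1 xi in F F' F'' *; set th' := theta p m'.+1 xi' in F F' F'' *.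
set th'' := theta p m'.+1 xi'' in F F' F'' *.
set A := (p ^ m'.+1 * th 1 0 + p ^ m' * th 2 0)%N in F F' F'' *.
set A' := (p ^ m'.+1 * th' 1 0 + p ^ m' * th' 2 0)%N in F F' F'' *.
set A'' := (p ^ m'.+1 * th'' 1 0 + p ^ m' * th'' 2 0)%N in F F' F'' *.
have C : forall q : 'I_p, (A'' + p ^ m'.+1 * W p' th'' q = A + A' + p ^ m'.+1 * (W p' th q + W p' th' q) %[mod p ^ m'.+2])%N.
  move=> r; apply: (@E_inj R _ _ _ M0); rewrite -F'' /xi'' F F' -ED; congr (E _ _ _); ring.
have CA : (A'' = A + A' %[mod p ^ m'.+2])%N.
  by have := C ord0; rewrite /= !W0 !muln0 !addn0.
have Cq : forall q : 'I_p, (W p' th'' q = W p' th q + W p' th' q %[mod p])%N.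
  move=> r; exact: (@cong_step p m'.+1 _ _ _ _ p0 (C r) CA).
pose d (a : nat) := if a is 0 then 0%N else th'' 1%N a.
pose e (a : nat) := if a is 0 then 0%N else (th 1%N a + th' 1%N a)%N.
have sW : forall (f : nat -> nat) (t : nat -> nat -> nat) q, f 0%N = 0%N -> (forall a, f a.+1 = t 1%N a.+1) ->
    (\sum_(a < p) f a * q ^ a = W p' t q)%N.
  move=> f t r f0 ft; rewrite big_ord_recl f0 mul0n add0n /W; apply: eq_bigr => i _.
  by rewrite ft.
have U := @polyU p 1 d e pr.
have Hde : forall r, (r < p)%N -> (\sum_(a < p) d a * r ^ a = \sum_(a < p) e a * r ^ a %[mod p ^ 1])%N.
  move=> r rp; rewrite (sW d th'') // (sW e (fun j a => th j a + th' j a)%N) //.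
  rewrite expn1 (Cq (Ordinal rp)) /W -big_split /=.
  by congr (_ %% _)%N; apply: eq_bigr => i _; rewrite mulnDl.
have H11 := U Hde 1%N p1; rewrite expn1 /= in H11.
have -> : (p ^ m'.+1 * (th'' 1 0 + th'' 1 1 * q) + p ^ m' * th'' 2 0 = A'' + p ^ m'.+1 * (th'' 1 1 * q))%N.
  by rewrite /A''; ring.
have -> : ((p ^ m'.+1 * (th 1 0 + th 1 1 * q) + p ^ m' * th 2 0) + (p ^ m'.+1 * (th' 1 0 + th' 1 1 * q) + p ^ m' * th' 2 0)
   = A + A' + p ^ m'.+1 * ((th 1 1 + th' 1 1) * q))%N.
  by rewrite /A /A'; ring.
apply: cong_back => //.
by rewrite -modnMml H11 modnMml.
Qed.
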